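(* Let $N^h\ge 2$ be an integer, $h=1/N^h$, and let $\eta_K,\eta_M$ be real parameters. Let $\mathbf{K}_s=\mathbf{K}-\eta_K\mathbf{S}$ and $\mathbf{M}_{gs}=\mathbf{M}+\eta_M\mathbf{S}_g$ be the $(N^h-1)\times(N^h-1)$ matrices described in the context. Then the generalized matrix eigenvalue problem $\mathbf{K}_{s}\mathbf{U}_{gs}=\lambda^h_{gs}\mathbf{M}_{gs}\mathbf{U}_{gs}$ has, for every $j\in\{1,\dots,N^h-1\}$, the eigenpair $(\lambda^h_{gs,j},\mathbf{U}_{gs,j})$ given by \[ \lambda_{gs,j}^h=\frac{12}{h^2}\,\frac{\big(1-2\eta_K+2\eta_K\cos(t_j)\big)\sin^2(t_j/2)}{2+18\eta_M+(1-24\eta_M)\cos(t_j)+6\eta_M\cos(2t_j)},\qquad \mathbf{U}_{gs,j,k}=c_j\sin(k t_j),\quad k=1,\dots,N^h-1, \] where $t_j:=j\pi h$, $\mathbf{U}_{gs,j,k}$ denotes the $k$-th component of $\mathbf{U}_{gs,j}$, and $c_j>0$ is a normalization constant.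
   Context: Setting (linear finite elements, generalized SoftFEM, in 1D): Let $x_k=kh$, $k=0,\dots,N^h$, be a uniform mesh of $[0,1]$. Let $V^h$ be the space of continuous functions on $[0,1]$ that are affine on each $[x_{k-1},x_k]$ and vanish at $0$ and $1$, with hat basis $\phi_k$, $k=1,\dots,N^h-1$, $\phi_k(x_l)=\delta_{kl}$. For $v\in V^h$ and an interior node $x_k$ let $[\![v']\!](x_k)=v'(x_k^-)-v'(x_k^+)$ be the jump of the derivative. Define $a(v,w)=\int_0^1 v'w'\,dx$, $b(v,w)=\int_0^1 vw\,dx$, $s(v,w)=\sum_{k=1}^{N^h-1} h\,[\![v']\!](x_k)[\![w']\!](x_k)$, $s_g(v,w)=\sum_{k=1}^{N^h-1} h^3\,[\![v']\!](x_k)[\![w']\!](x_k)$, and the matrices $\mathbf{K}_{kl}=a(\phi_l,\phi_k)$, $\mathbf{M}_{kl}=b(\phi_l,\phi_k)$, $\mathbf{S}_{kl}=s(\phi_l,\phi_k)$, $(\mathbf{S}_g)_{kl}=s_g(\phi_l,\phi_k)$, $k,l=1,\dots,N^h-1$. Explicitly, $\mathbf{K}=\frac1h\,\mathrm{tridiag}(-1,2,-1)$, $\mathbf{M}=h\,\mathrm{tridiag}(\tfrac16,\tfrac23,\tfrac16)$, $\mathbf{S}=\frac1h$ times the symmetric pentadiagonal matrix with rows $(1,-4,6,-4,1)$ except that the first and last diagonal entries are $5$ (rows truncated at the boundary), and $\mathbf{S}_g=h^2\mathbf{S}$. *)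

(* Defs.v *)
From HB Require Import structures.
From mathcomp Require Import all_boot all_order all_algebra.
From mathcomp Require Import all_classical all_reals all_analysis.
Set Implicit Arguments. Unset Strict Implicit. Unset Printing Implicit Defensive.
Import Order.TTheory GRing.Theory Num.Theory.
Local Open Scope ring_scope.

Section SoftFEM.
Variable R : realType.

(* Matrix index i : 'I_(N.-1) stands for the interior node x_(i+1). *)

Definition mesh (N : nat) : R := 1 / N%:R.

Definition adj1 (i j : nat) : bool := (i.+1 == j) || (j.+1 == i).

Definition Kmat (N : nat) : 'M[R]_(N.-1) :=
  \matrix_(i, j) ((mesh N)^-1 *
     (if i == j then 2 else if adj1 i j then -1 else 0)).

Definition Mmat (N : nat) : 'M[R]_(N.-1) :=
  \matrix_(i, j) (mesh N *
     (if i == j then 2 / 3 else if adj1 i j then 1 / 6 else 0)).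

(* [[phi_k']](x_m) = phi_k'(x_m^-) - phi_k'(x_m^+), for interior nodes k, m *)
Definition jump (N k m : nat) : R :=
  (mesh N)^-1 * (if k == m then 2 else if adj1 k m then -1 else 0).

(* S_{kl} = s(phi_l, phi_k) = sum_m h [[phi_l']](x_m) [[phi_k']](x_m) *)
Definition Smat (N : nat) : 'M[R]_(N.-1) :=
  \matrix_(k, l) \sum_(m < N.-1) (mesh N * jump N l m * jump N k m).

(* (S_g)_{kl} = s_g(phi_l, phi_k) = sum_m h^3 [[phi_l']](x_m) [[phi_k']](x_m) *)
Definition Sgmat (N : nat) : 'M[R]_(N.-1) :=
  \matrix_(k, l) \sum_(m < N.-1) (mesh N ^+ 3 * jump N l m * jump N k m).

Definition Ksmat (N : nat) (etaK : R) : 'M[R]_(N.-1) := Kmat N - etaK *: Smat N.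
Definition Mgsmat (N : nat) (etaM : R) : 'M[R]_(N.-1) := Mmat N + etaM *: Sgmat N.

Definition tj (N j : nat) : R := j%:R * pi * mesh N.

Definition lam_denom (N j : nat) (etaM : R) : R :=
  2 + 18 * etaM + (1 - 24 * etaM) * cos (tj N j) + 6 * etaM * cos (2 * tj N j).

Definition lam_gs (N j : nat) (etaK etaM : R) : R :=
  12 / (mesh N ^+ 2) *
  ((1 - 2 * etaK + 2 * etaK * cos (tj N j)) * sin (tj N j / 2) ^+ 2)
  / lam_denom N j etaM.

Definition U_gs (N j : nat) (c : R) : 'cV[R]_(N.-1) :=
  \col_i (c * sin ((i.+1)%:R * tj N j)).

End SoftFEM.

(* Main.v *)
Require Import Defs.
From HB Require Import structures.
From mathcomp Require Import all_boot all_order all_algebra.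
From mathcomp Require Import all_classical all_reals all_analysis.
From mathcomp Require Import ring lra zify.
Local Close Scope ring_scope.
Local Open Scope ring_scope.
Import Order.TTheory GRing.Theory Num.Theory.
Local Open Scope ring_scope.

Section S.
Variable R : realType.

Definition Tm n (p q : R) : 'M[R]_n :=
  \matrix_(i < n, j < n) (if i == j then p else if Defs.adj1 i j then q else 0).

Lemma sum_ind n m (F : nat -> R) :
  \sum_(k < n) (((k:nat) == m)%:R * F k) = (m < n)%:R * F m.
Proof.
elim: n => [|n IH]; first by rewrite big_ord0 ltn0 mul0r.
rewrite big_ord_recr /= IH.
have [->|ne] := eqVneq n m.
  by rewrite ltnn ltnSn /= !mul0r mul1r add0r.
have -> : (m < n.+1)%N = (m < n)%N by rewrite ltnS leq_eqVlt; case: eqP => // e; move/eqP: ne; rewrite e.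
by rewrite mul0r addr0.
Qed.

Lemma Tentry (p q : R) (i k : nat) :
  (if i == k then p else if Defs.adj1 i k then q else 0) =
  p * (k == i)%:R + q * (k == i.+1)%:R + q * (k.+1 == i)%:R.
Proof.
rewrite /Defs.adj1 (eq_sym k i) (eq_sym k i.+1).
case: (boolP (i == k)) => e1; case: (boolP (i.+1 == k)) => e2;
  case: (boolP (k.+1 == i)) => e3 /=; rewrite ?mulr0 ?mulr1 ?addr0 ?add0r //;
  exfalso; move: e1 e2 e3; lia.
Qed.

Lemma tri_mul n (p q t : R) (g : nat -> R) :
  g 0%N = 0 -> g n.+1 = 0 -> (forall k, g k + g k.+2 = 2 * cos t * g k.+1) ->
  Tm n p q *m (\col_(i < n) g i.+1) = (p + 2 * q * cos t) *: (\col_(i < n) g i.+1).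
Proof.
move=> g0 gn rec; apply/matrixP => i z; rewrite !mxE.
under eq_bigr => k _ do rewrite !mxE Tentry !mulrDl -!mulrA.
rewrite !big_split /= -!mulr_sumr.
rewrite !(sum_ind _ _ (fun k => g k.+1)) /=.
have key m : (m <= n)%N -> (m < n)%:R * g m.+1 = g m.+1.
  case: ltnP => [_ _|h1 h2]; first by rewrite mul1r.
  have -> : m = n by lia.
  by rewrite gn mulr0.
case: i => [[|i] Hi] /=.
  rewrite big1 => [|k _]; last by rewrite mul0r.
  rewrite Hi (key 1%N) //.
  have := rec 0%N; rewrite g0 add0r => ->. rewrite mul1r; ring.
under eq_bigr => k _ do rewrite eqSS.
rewrite (sum_ind _ _ (fun k => g k.+1)) (ltnW Hi) Hi (key i.+2) //.
have := rec i.+1 => e.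
rewrite !mul1r; transitivity (p * g i.+2 + q * (g i.+1 + g i.+3)); first ring.
by rewrite e; ring.
Qed.

Lemma Tsym (p q : R) (i k : nat) :
  (if i == k then p else if Defs.adj1 i k then q else 0) =
  (if k == i then p else if Defs.adj1 k i then q else 0).
Proof. by rewrite /Defs.adj1 eq_sym orbC. Qed.

Lemma sin_natpi k : sin (k%:R * pi) = 0 :> R.
Proof.
elim: k => [|k IH]; first by rewrite mul0r sin0.
by rewrite -addn1 natrD mulrDl mul1r sinD IH sinpi; ring.
Qed.

End S.

Theorem lemma1 (R : realType) (N : nat) (etaK etaM : R) (j : nat) (c : R) :
  (2 <= N)%N -> (1 <= j <= N.-1)%N -> 0 < c ->
  lam_denom N j etaM != 0 ->
  U_gs N j c != 0 /\
  Ksmat N etaK *m U_gs N j c = lam_gs N j etaK etaM *: (Mgsmat N etaM *m U_gs N j c).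
Proof.
move=> HN /andP[j1 jN] c0 D0.
have N0 : (0 < N%:R :> R) by rewrite ltr0n; lia.
have h0 : mesh R N != 0 by rewrite /mesh div1r invr_eq0 gt_eqF.
set t := tj R N j.
have t0 : 0 < t < pi.
  rewrite /t /tj /mesh div1r; apply/andP; split.
    by rewrite mulr_gt0 ?invr_gt0 // mulr_gt0 ?pi_gt0 // ltr0n; lia.
  rewrite ltr_pdivrMr // mulrC.
  rewrite ltr_pM2l ?pi_gt0 // ltr_nat; lia.
pose g k := c * sin (k%:R * t).
have UE : U_gs N j c = \col_(i < N.-1) g i.+1 by apply/matrixP => a b; rewrite !mxE.
split.
  have Hn : (0 < N.-1)%N by lia.
  apply/eqP => /matrixP /(_ (Ordinal Hn) ord0).
  rewrite /U_gs !mxE mul1r => /eqP.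
  by rewrite -/t mulf_eq0 (gt_eqF c0) (gt_eqF (sin_gt0_pi t0)).
have g0 : g 0%N = 0 by rewrite /g mul0r sin0 mulr0.
have gn : g N.-1.+1 = 0.
  rewrite /g prednK; last lia.
  have -> : N%:R * t = j%:R * pi by rewrite /t /tj /mesh; field; rewrite gt_eqF.
  by rewrite sin_natpi mulr0.
have rec k : g k + g k.+2 = 2 * cos t * g k.+1.
  have e1 : k.+2%:R * t = k.+1%:R * t + t.
    by rewrite -[k.+2]addn1 natrD mulrDl mul1r.
  have e2 : k%:R * t = k.+1%:R * t - t.
    by rewrite -[k.+1]addn1 natrD mulrDl mul1r addrK.
  rewrite /g e1 {1}e2 sinB sinD; ring.
have Tv (p q : R) := @tri_mul R _ p q t g g0 gn rec.
set h := mesh R N.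
have KE : Kmat R N = h^-1 *: Tm R N.-1 2 (-1).
  by apply/matrixP => a b; rewrite !mxE.
have ME : Mmat R N = h *: Tm R N.-1 (2/3) (1/6).
  by apply/matrixP => a b; rewrite !mxE.
have SE : Smat R N = h^-1 *: (Tm R N.-1 2 (-1) *m Tm R N.-1 2 (-1)).
  apply/matrixP => a b; rewrite !mxE mulr_sumr; apply: eq_bigr => m _.
  rewrite !mxE /jump (Tsym _ _ _ b m) -/h.
  set u := (if m == b then _ else _); set w := (if a == m then _ else _); by field.
have SgE : Sgmat R N = h *: (Tm R N.-1 2 (-1) *m Tm R N.-1 2 (-1)).
  apply/matrixP => a b; rewrite !mxE mulr_sumr; apply: eq_bigr => m _.
  rewrite !mxE /jump (Tsym _ _ _ b m) -/h.
  set u := (if m == b then _ else _); set w := (if a == m then _ else _); by field.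
rewrite UE /Ksmat /Mgsmat KE ME SE SgE mulmxBl mulmxDl -!scalemxAl -!mulmxA !Tv.
rewrite -!scalemxAr !Tv !scalerA -scalerBl -scalerDl scalerA.
congr (_ *: _).
have c2 : cos (2 * t) = cos t ^+ 2 *+ 2 - 1 by rewrite mulr_natl cos_mulr2n.
have ch : cos t = 1 - (sin (t / 2) ^+ 2) *+ 2.
  have e : t = (t / 2) *+ 2 by rewrite mulr2n; field.
  by rewrite {1}e cos_mulr2n cos2sin2; ring.
move: D0; rewrite /lam_gs /lam_denom -/t -/h c2 ch => D0.
field.
apply/andP; split.
  by rewrite !mulr_natr.
by [].

Qed.
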